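(* Let $X=(x_1,\ldots,x_N)$ with $x_n\in\mathbb{R}^D$, let $K\in\mathbb{N}$, and let $p_{nk}\in[0,1]$ ($n=1,\ldots,N$, $k=1,\ldots,K$) with $\sum_{k=1}^K p_{nk}=1$ for every $n$. Let $z_1,\ldots,z_N$ be independent random vectors, where $z_n=(z_{n1},\ldots,z_{nK})\in\{0,1\}^K$ has exactly one entry equal to $1$ and $\Pr(z_{nk}=1)=p_{nk}$. Define $r_k=\sum_{n=1}^N p_{nk}$, $w_k^{EM}=\frac{r_k}{N}$ and $w_k^{SEM}=\frac{1}{N}\sum_{n=1}^N z_{nk}$. Fix $k\in\{1,\ldots,K\}$ with $r_k>0$ and let $2e^{-r_k/3}\leq\delta\leq 1$. Then for $\lambda_w=\sqrt{\frac{3\ln(2/\delta)}{r_k}}$, with probability at least $1-\delta$, \[\left|w_k^{SEM}-w_k^{EM}\right|\leq\lambda_w\, w_k^{EM}.\]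
   Context: This describes one update step of the EM and the stochastic EM (SEM) algorithm for a Gaussian mixture: $p_{nk}=p(z_{nk}=1\mid X,\theta)$ is the posterior probability (responsibility) that component $k$ generated $x_n$ under the current parameters $\theta$; EM sets the new weight to $w_k^{EM}$, while SEM samples the assignment $z$ from these posteriors independently for each $n$ and sets the new weight to $w_k^{SEM}$. *)

(* Defs.v *)
From HB Require Import structures.
From mathcomp Require Import all_boot all_order all_algebra.
From mathcomp Require Import reals sequences exp.
Set Implicit Arguments. Unset Strict Implicit. Unset Printing Implicit Defensive.
Import Order.TTheory GRing.Theory Num.Theory.
Local Open Scope ring_scope.

(* An assignment z = (z_1,...,z_N), where z_n in {0,1}^K has exactly one entry
   equal to 1, is encoded as a function z : 'I_N -> 'I_K (z n = the index of
   the 1 entry); so z_{nk} = (z n == k). The z_n are independent with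
   Pr(z_{nk}=1) = p n k, i.e. the joint law is the product distribution. *)

Section SEM.
Variables (R : realType) (N K : nat) (p : 'I_N -> 'I_K -> R).

Definition assign_prob (z : {ffun 'I_N -> 'I_K}) : R := \prod_(n < N) p n (z n).

Definition Prob (E : pred {ffun 'I_N -> 'I_K}) : R :=
  \sum_(z : {ffun 'I_N -> 'I_K} | E z) assign_prob z.

Definition zind (z : {ffun 'I_N -> 'I_K}) (n : 'I_N) (k : 'I_K) : R :=
  (z n == k)%:R.

Definition resp (k : 'I_K) : R := \sum_(n < N) p n k.
Definition wEM (k : 'I_K) : R := resp k / N%:R.
Definition wSEM (z : {ffun 'I_N -> 'I_K}) (k : 'I_K) : R :=
  (\sum_(n < N) zind z n k) / N%:R.
Definition lambda_w (k : 'I_K) (delta : R) : R :=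
  Num.sqrt (3 * ln (2 / delta) / resp k).
End SEM.

(* Main.v *)
Require Import Defs.
From HB Require Import structures.
From mathcomp Require Import all_boot all_order all_algebra.
From mathcomp Require Import boolp classical_sets functions reals sequences exp.
From mathcomp Require Import topology normedtype derive realfun.
From mathcomp Require Import ring lra.
Import Order.TTheory GRing.Theory Num.Theory.
Import numFieldNormedType.Exports.
Local Open Scope ring_scope.

Lemma exp_le_quad (R : realType) (t : R) : 0 <= t <= 2/3 ->
  expR t <= 1 + t + 3/4 * t^+2.
Proof.
move=> /andP[t0 t23].
pose P : R -> R := (cst 1 + id) + (3/4 : R) \*: (id * id).
pose E : R -> R := expR \o -%R.
pose F : R -> R := P * E.
pose dF (x : R) := expR (- x) * (x / 2 - 3/4 * x^+2).
have hd : forall x : R, is_derive x 1 F (dF x).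
  move=> x.
  have hP := is_deriveD (is_deriveD (is_derive_cst (1:R) x 1) (is_derive_id x 1))
     (is_deriveZ (3/4 : R) (is_deriveM (is_derive_id x 1) (is_derive_id x 1))).
  have hE := is_derive1_comp (is_derive_expR (- x)) (is_deriveNid x 1).
  have := is_deriveM hP hE.
  move=> h; apply: is_derive_eq h _.
  change ((1 + x + 3/4 * (x * x)) * (expR (- x) * -1) + expR (-x) * (0 + 1 + 3/4 * (x * 1 + x * 1)) = dF x).
  by rewrite /dF; field.
have hF0 : F 0 = 1.
  change ((1 + 0 + 3/4 * (0 * 0)) * expR (- 0) = 1 :> R).
  by rewrite oppr0 expR0; field.
have hFt : F t = (1 + t + 3/4 * t^+2) * expR (- t).
  by change ((1 + t + 3/4 * (t * t)) * expR (- t) = (1 + t + 3/4 * t^+2) * expR (- t)); rewrite expr2.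
have ge1 : 1 <= F t.
  case: (eqVneq t 0) => [->|tn0]; first by rewrite hF0.
  have tp : 0 < t by rewrite lt_def tn0.
  case: (MVT tp (fun x _ => hd x)).
    apply/continuous_subspaceT => r.
    by case: (hd r) => dr _; exact/differentiable_continuous/derivable1_diffP.
  move=> c cin hc.
  move: cin; rewrite in_itv /= => /andP[c0 ct].
  have : 0 <= dF c * (t - 0).
    apply: mulr_ge0; last lra.
    apply: mulr_ge0; first exact: expR_ge0.
    nra.
  rewrite -hc hF0; lra.
have e1 : expR t * expR (- t) = 1 by rewrite expRxMexpNx_1.
rewrite hFt in ge1.
have ep : 0 < expR t by exact: expR_gt0.
nra.
Qed.

Lemma mgf (R : realType) (N K : nat) (p : 'I_N -> 'I_K -> R)
  (hpsum : forall n, \sum_(k < K) p n k = 1) (k : 'I_K) (t : R) :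
  \sum_(z : {ffun 'I_N -> 'I_K}) assign_prob p z * expR (t * \sum_(n < N) zind R z n k)
  = \prod_(n < N) (1 + p n k * (expR t - 1)).
Proof.
under eq_bigr => z _ do rewrite mulr_sumr expR_sum /assign_prob -big_split /=.
rewrite -(bigA_distr_bigA (fun n j => p n j * expR (t * (j == k)%:R))) /=.
apply: eq_bigr => n _.
rewrite (bigD1 k) //= eqxx mulr1.
have := hpsum n; rewrite (bigD1 k) //= => hs.
rewrite (eq_bigr (fun j => p n j)); last first.
  by move=> j /negbTE ->; rewrite mulr0 expR0 mulr1.
have -> : \sum_(i < K | i != k) p n i = 1 - p n k by rewrite -hs addrAC subrr add0r.
ring.
Qed.

Lemma expN_le_quad (R : realType) (s : R) : 0 <= s ->
  expR (- s) <= 1 - s + 3/4 * s^+2.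
Proof.
move=> s0.
have ha : 1 + s / 2 <= expR (s / 2) by exact: expR_ge1Dx.
have hb : expR (- s) * (expR (s / 2) * expR (s / 2)) = 1.
  by rewrite -expRD -expRD; rewrite (_ : - s + (s/2 + s/2) = 0) ?expR0 //; field.
set a := expR (s / 2) in ha hb.
set b := expR (- s) in hb *.
have bp : 0 < b by exact: expR_gt0.
have h1 : (1 + s/2) * (1 + s/2) * (1 - s + 3/4 * s^+2) >= 1.
  have : (1 + s/2) * (1 + s/2) * (1 - s + 3/4 * s^+2) - 1 = s^+3 / 2 + 3 / 16 * s^+4 by field.
  move=> e; rewrite -subr_ge0 e; apply: addr_ge0; apply: mulr_ge0; first [exact: exprn_ge0 | lra].
have hq : 0 <= 1 - s + 3/4 * s^+2.
  have : 1 - s + 3/4 * s^+2 = (1 - s/2 * 1) ^+ 2 + s^+2 / 2 by field.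
  move=> ->; apply: addr_ge0; [exact: sqr_ge0| apply: mulr_ge0; first [exact: sqr_ge0 | lra]].
have haa : (1 + s/2) * (1 + s/2) <= a * a.
  apply: ler_pM => //; lra.
have : a * a * b <= a * a * (1 - s + 3/4 * s^+2).
  rewrite mulrC hb; apply: le_trans h1 _; exact: ler_wpM2r.
rewrite ler_pM2l //; apply: mulr_gt0; lra.
Qed.

Lemma prod_bound (R : realType) (N K : nat) (p : 'I_N -> 'I_K -> R)
  (hp01 : forall n k, 0 <= p n k <= 1) (k : 'I_K) (u : R) :
  \prod_(n < N) (1 + p n k * (expR u - 1)) <= expR (resp p k * (expR u - 1)).
Proof.
rewrite /resp mulr_suml expR_sum.
apply: ler_prod => n _; apply/andP; split; last exact: expR_ge1Dx.
have := hp01 n k; have := expR_gt0 u; nra.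
Qed.

Lemma mgf_bound (R : realType) (N K : nat) (p : 'I_N -> 'I_K -> R)
  (hp01 : forall n k, 0 <= p n k <= 1)
  (hpsum : forall n, \sum_(k < K) p n k = 1) (k : 'I_K) (u c : R) :
  \sum_(z : {ffun 'I_N -> 'I_K}) assign_prob p z * expR (u * \sum_(n < N) zind R z n k + c)
  <= expR (c + resp p k * (expR u - 1)).
Proof.
under eq_bigr => z _ do rewrite expRD mulrA.
rewrite -big_distrl /= mgf // expRD mulrC ler_wpM2l ?expR_ge0 //.
exact: prod_bound.
Qed.

Theorem theorem1 (R : realType) (D N K : nat) (X : 'I_N -> 'rV[R]_D)
  (p : 'I_N -> 'I_K -> R)
  (hp01 : forall n k, 0 <= p n k <= 1)
  (hpsum : forall n, \sum_(k < K) p n k = 1)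
  (k : 'I_K) (delta : R)
  (hr : 0 < resp p k)
  (hdelta : 2 * expR (- (resp p k / 3)) <= delta <= 1) :
  1 - delta <=
    Prob p [pred z : {ffun 'I_N -> 'I_K} | `|@wSEM R N K z k - wEM p k| <= lambda_w p k delta * wEM p k].
Proof.
set r := resp p k in hr hdelta *.
set L := lambda_w p k delta.
move: hdelta => /andP[hd1 hd2].
have ep := expR_gt0 (- (r / 3)).
have dp : 0 < delta by lra.
have Npos : (0 < N)%N.
  rewrite lt0n; apply/negP => /eqP N0.
  move: hr; rewrite /r /resp big1 ?ltxx // => i _.
  by have := ltn_ord i; move: (nat_of_ord i) => m; rewrite N0.
have Nr : 0 < N%:R :> R by rewrite ltr0n.
have Ni : 0 < N%:R^-1 :> R by rewrite invr_gt0.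
have l2d : 1 <= 2 / delta.
  by rewrite ler_pdivlMr // mul1r; lra.
have lnge0 : 0 <= ln (2 / delta) by exact: ln_ge0.
have argge0 : 0 <= 3 * ln (2 / delta) / r.
  by apply: divr_ge0; [apply: mulr_ge0 => //; lra | lra].
have L0 : 0 <= L by exact: sqrtr_ge0.
have L2 : L ^+ 2 = 3 * ln (2 / delta) / r by rewrite /L /lambda_w sqr_sqrtr.
have lnle : ln (2 / delta) <= r / 3.
  rewrite -[X in _ <= X]expRK ler_ln //; last by rewrite posrE expR_gt0.
  - have e1 : expR (r / 3) * expR (- (r / 3)) = 1 by rewrite expRxMexpNx_1.
    rewrite ler_pdivrMr //.
    have := expR_gt0 (r / 3); nra.
  - by rewrite posrE divr_gt0.
have L1 : L <= 1.
  have : L ^+ 2 <= 1.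
    by rewrite L2 ler_pdivrMr // mul1r; lra.
  nra.
have eL : expR (- (r * L ^+ 2 / 3)) = delta / 2.
  rewrite L2 (_ : r * (3 * ln (2 / delta) / r) / 3 = ln (2 / delta)); last by field; lra.
  rewrite expRN lnK ?posrE ?divr_gt0 //.
  by rewrite invf_div.
pose S z := \sum_(n < N) zind R z n k.
pose t := 2/3 * L.
have t0 : 0 <= t by rewrite /t; lra.
have t23 : t <= 2/3 by rewrite /t; lra.
pose g1 z := expR (t * S z + (- (t * (1 + L) * r))).
pose g2 z := expR (- t * S z + t * (1 - L) * r).
have ap z : 0 <= assign_prob p z.
  by apply: prodr_ge0 => n _; case/andP: (hp01 n (z n)).
have M1 : \sum_z assign_prob p z * g1 z <= delta / 2.
  rewrite /g1 /g2 /S; apply: le_trans (@mgf_bound _ _ _ _ hp01 hpsum k _ _) _.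
  rewrite -eL ler_expR.
  have h := @exp_le_quad _ t (introT andP (conj t0 t23)).
  have h2 : r * (expR t - 1) <= r * (t + 3/4 * t^+2).
    by apply: ler_wpM2l; lra.
  have -> : - (r * L ^+ 2 / 3) = - (t * (1 + L) * r) + r * (t + 3/4 * t^+2).
    by rewrite /t; field.
  rewrite -/r; lra.
have M2 : \sum_z assign_prob p z * g2 z <= delta / 2.
  rewrite /g1 /g2 /S; apply: le_trans (@mgf_bound _ _ _ _ hp01 hpsum k _ _) _.
  rewrite -eL ler_expR.
  have h := @expN_le_quad _ t t0.
  have h2 : r * (expR (- t) - 1) <= r * (- t + 3/4 * t^+2).
    by apply: ler_wpM2l; lra.
  have -> : - (r * L ^+ 2 / 3) = t * (1 - L) * r + r * (- t + 3/4 * t^+2).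
    by rewrite /t; field.
  rewrite -/r; lra.
have tot : \sum_z assign_prob p z = 1.
  have := @mgf _ _ _ _ hpsum k 0.
  under eq_bigr => z _ do rewrite mul0r expR0 mulr1.
  move=> ->; rewrite expR0 subrr; apply: big1 => n _; rewrite mulr0 addr0 //.
rewrite /Prob.
set E := [pred z | _].
rewrite (bigID E) /= in tot.
have key z : ~~ E z -> 1 <= g1 z + g2 z.
  move=> hz.
  have hlt : L * r < `|S z - r|.
    rewrite ltNge; apply: contra hz => h.
    rewrite /E /= /wSEM /wEM -/r -mulrBl normrM (gtr0_norm Ni) //.
    rewrite mulrA ler_pM2r ?invr_gt0 //.
  have g1p : 0 <= g1 z by exact: expR_ge0.
  have g2p : 0 <= g2 z by exact: expR_ge0.
  move: hlt; rewrite ltr_normr => /orP[h|h].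
  - have : 1 <= g1 z.
      apply: le_trans (expR_ge1Dx _); rewrite lerDl.
      have -> : t * S z + - (t * (1 + L) * r) = t * (S z - r - L * r) by ring.
      apply: mulr_ge0 => //; lra.
    lra.
  - have : 1 <= g2 z.
      apply: le_trans (expR_ge1Dx _); rewrite lerDl.
      have -> : - t * S z + t * (1 - L) * r = t * (- (S z - r) - L * r) by ring.
      apply: mulr_ge0 => //; lra.
    lra.
have comp : \sum_(z | ~~ E z) assign_prob p z <= delta.
  apply: (@le_trans _ _ (\sum_(z | ~~ E z) assign_prob p z * (g1 z + g2 z))).
    apply: ler_sum => z hz; rewrite -[leLHS]mulr1; apply: ler_wpM2l => //.
    exact: key.
  apply: (@le_trans _ _ (\sum_z assign_prob p z * (g1 z + g2 z))).
    rewrite [X in _ <= X](bigID (fun z => ~~ E z)) /= lerDl.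
    apply: sumr_ge0 => z _; apply: mulr_ge0 => //; apply: addr_ge0; exact: expR_ge0.
  under eq_bigr => z _ do rewrite mulrDr.
  rewrite big_split /=; lra.
lra.
Qed.
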